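(* Let \(G\) be a graph with \(\mathrm{surplus}(G)\geq 2\), and let \(V(G)=O\uplus I\uplus P\) be the Gallai–Edmonds decomposition of \(G\). If \(I\cup P\) is an independent set in \(G\), then: (1) there is at least one vertex \(o\in O\) which has at least two neighbours in \(O\); (2) if \(v\in O\) is a neighbour of some vertex \(o\in O\), \(G'=G[V(G)\setminus\{o\}]\), and \(V(G')=O'\uplus I'\uplus P'\) is the Gallai–Edmonds decomposition of \(G'\), then the induced subgraph \(G'[P']\) contains at least one edge.
   Context: All graphs are finite, undirected and simple. For \(X\subseteq V(G)\), \(N(X)\) is the set of vertices not in \(X\) adjacent to some vertex of \(X\). The surplus of an independent set \(X\) is \(|N(X)|-|X|\); \(\mathrm{surplus}(G)\) is the minimum surplus over all nonempty independent sets of \(G\). The Gallai–Edmonds decomposition of a graph \(H\) is the partition \(V(H)=O\uplus I\uplus P\) where \(O\) is the set of vertices \(v\) such that some maximum matching of \(H\) leaves \(v\) unsaturated, \(I=N(O)\), and \(P=V(H)\setminus(I\cup O)\). *)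

(* Defs.v *)
From mathcomp Require Import all_boot.
Set Implicit Arguments. Unset Strict Implicit. Unset Printing Implicit Defensive.

(* A simple graph: vertex type T : finType, adjacency e : rel T, assumed
   symmetric and irreflexive (hypotheses of the theorem).  Induced subgraphs
   G[S] are handled by carrying the vertex set S : {set T}. *)

Section Graph.
Variables (T : finType) (e : rel T).

Definition independent (X : {set T}) : bool :=
  [forall x in X, forall y in X, ~~ e x y].

Definition nbhd (S X : {set T}) : {set T} :=
  [set y in S | (y \notin X) && [exists x in X, e x y]].

Definition surplus_ge (k : nat) : bool :=
  [forall X : {set T}, (independent X && (X != set0)) ==>
     (#|X| + k <= #|nbhd [set: T] X|)].

Definition is_matching (S : {set T}) (M : {set {set T}}) : bool :=
  [forall E in M, exists x in S, exists y in S, e x y && (E == [set x; y])] &&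
  [forall E1 in M, forall E2 in M, (E1 != E2) ==> [disjoint E1 & E2]].

Definition is_max_matching (S : {set T}) (M : {set {set T}}) : bool :=
  is_matching S M &&
  [forall M' : {set {set T}}, is_matching S M' ==> (#|M'| <= #|M|)].

Definition saturates (M : {set {set T}}) (v : T) : bool :=
  [exists E in M, v \in E].

Definition GE_O (S : {set T}) : {set T} :=
  [set v in S | [exists M : {set {set T}}, is_max_matching S M && ~~ saturates M v]].

Definition GE_I (S : {set T}) : {set T} := nbhd S (GE_O S).

Definition GE_P (S : {set T}) : {set T} := S :\: (GE_I S :|: GE_O S).

End Graph.

(* Main.v *)
Require Import Defs.
From mathcomp Require Import all_boot.
Set Implicit Arguments. Unset Strict Implicit. Unset Printing Implicit Defensive.

Fact cover_key : unit. Proof. exact: tt. Qed.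
Definition mcover (T : finType) (M : {set {set T}}) : {set T} :=
  locked_with cover_key [set v | saturates M v].

Lemma coverP (T : finType) (M : {set {set T}}) v :
  reflect (exists2 E, E \in M & v \in E) (v \in mcover M).
Proof. rewrite /mcover unlock_with inE; apply: (iffP existsP) => [[E /andP[? ?]]|[E ? ?]]; first by exists E.
by exists E; apply/andP. Qed.

Lemma ism_edge (T : finType) (e : rel T) M E : is_matching e setT M -> E \in M ->
  exists x y, [/\ e x y & E = [set x; y]].
Proof.
case/andP=> /forallP /(_ E) /implyP H _ /H /existsP [x /andP[_ /existsP[y /andP[_ /andP[exy /eqP->]]]]].
by exists x, y.
Qed.

Lemma ism_disj (T : finType) (e : rel T) M E1 E2 : is_matching e setT M ->
  E1 \in M -> E2 \in M -> E1 != E2 -> [disjoint E1 & E2].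
Proof.
case/andP=> _ /forallP /(_ E1) /implyP H /H /forallP /(_ E2) /implyP H2 /H2.
by move/implyP.
Qed.

Lemma ism_sub (T : finType) (e : rel T) (M M' : {set {set T}}) : is_matching e setT M -> M' \subset M ->
  is_matching e setT M'.
Proof.
move=> hM sub; apply/andP; split.
  apply/forallP=> E; apply/implyP=> EM.
  have [x [y [exy ->]]] := ism_edge hM (subsetP sub _ EM).
  by apply/existsP; exists x; rewrite inE /=; apply/existsP; exists y; rewrite inE exy eqxx.
apply/forallP=> E1; apply/implyP=> E1M; apply/forallP=> E2; apply/implyP=> E2M.
apply/implyP; exact: ism_disj hM (subsetP sub _ E1M) (subsetP sub _ E2M).
Qed.

Lemma notin_cover (T : finType) (M : {set {set T}}) E v :
  v \notin mcover M -> E \in M -> v \notin E.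
Proof. by move=> h EM; apply/negP=> vE; case/negP: h; apply/coverP; exists E. Qed.

Lemma ism_add (T : finType) (e : rel T) M x y : is_matching e setT M -> e x y ->
  x \notin mcover M -> y \notin mcover M -> is_matching e setT ([set x; y] |: M).
Proof.
move=> hM exy hx hy; apply/andP; split.
  apply/forallP=> E; apply/implyP; rewrite !inE => /orP[/eqP->|EM].
    by apply/existsP; exists x; rewrite inE /=; apply/existsP; exists y; rewrite inE exy eqxx.
  have [a [b [eab ->]]] := ism_edge hM EM.
  by apply/existsP; exists a; rewrite inE /=; apply/existsP; exists b; rewrite inE eab eqxx.
have key : forall E, E \in M -> [disjoint [set x; y] & E].
  move=> E EM; rewrite disjoint_subset; apply/subsetP=> z; rewrite !inE.
  by case/orP=> /eqP->; [exact: notin_cover hx EM|exact: notin_cover hy EM].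
apply/forallP=> E1; apply/implyP; rewrite !inE => /orP[/eqP->|E1M];
  apply/forallP=> E2; apply/implyP; rewrite !inE => /orP[/eqP->|E2M]; apply/implyP.
- by move=> /negP[].
- by move=> _; apply: key.
- by move=> _; rewrite disjoint_sym; apply: key.
- by move=> ne; apply: (ism_disj hM E1M E2M).
Qed.

Lemma ism_at (T : finType) (e : rel T) (e_sym : symmetric e) M v :
  is_matching e setT M -> v \in mcover M -> exists y, e v y /\ [set v; y] \in M.
Proof.
move=> hM /coverP [E EM vE]; have [x [y [exy defE]]] := ism_edge hM EM.
move: vE; rewrite defE !inE => /orP[/eqP->|/eqP->].
  by exists y; rewrite -defE.
by exists x; rewrite e_sym setUC -defE.
Qed.

Lemma cover_D1 (T : finType) (e : rel T) M E : is_matching e setT M -> E \in M ->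
  mcover (M :\ E) = mcover M :\: E.
Proof.
move=> hM EM; apply/setP=> z; rewrite inE; apply/coverP/andP.
  case=> E'; rewrite !inE => /andP[ne E'M] zE'; split; last by apply/coverP; exists E'.
  have := ism_disj hM E'M EM ne; rewrite disjoint_sym disjoint_subset.
  by move/subsetP/(_ z)=> h; apply/negP=> zE; move: (h zE); rewrite inE zE'.
case=> zE /coverP[E' E'M zE']; exists E' => //; rewrite !inE E'M andbT.
by apply/eqP=> eq; move: zE; rewrite -eq zE'.
Qed.

Lemma cover_U1 (T : finType) (M : {set {set T}}) E : mcover (E |: M) = E :|: mcover M.
Proof.
apply/setP=> z; rewrite inE; apply/coverP/orP.
  case=> E'; rewrite !inE => /orP[/eqP->|E'M] zE'; first by left.
  by right; apply/coverP; exists E'.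
case=> [zE|/coverP[E' E'M zE']]; first by exists E; rewrite // !inE eqxx.
by exists E'; rewrite // !inE E'M orbT.
Qed.

Lemma in_cover_edge (T : finType) (M : {set {set T}}) x y :
  [set x; y] \in M -> (x \in mcover M) && (y \in mcover M).
Proof. by move=> h; apply/andP; split; apply/coverP; exists [set x; y]; rewrite // !inE eqxx ?orbT. Qed.

Lemma edge_notin (T : finType) (M : {set {set T}}) x y :
  x \notin mcover M -> [set x; y] \notin M.
Proof. by move=> h; apply/negP=> /in_cover_edge /andP[hx _]; rewrite hx in h. Qed.

Lemma ism_S (T : finType) (e : rel T) (S : {set T}) M :
  is_matching e S M -> is_matching e setT M /\ mcover M \subset S.
Proof.
move=> hM; have hT : is_matching e setT M.
  case/andP: hM => h1 h2; apply/andP; split=> //.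
  apply/forallP=> E; apply/implyP=> EM; move/forallP: h1 => /(_ E) /implyP /(_ EM).
  case/existsP=> x /andP[_ /existsP[y /andP[_ h]]].
  by apply/existsP; exists x; rewrite inE /=; apply/existsP; exists y; rewrite inE.
split=> //; apply/subsetP=> z /coverP[E EM zE].
case/andP: hM => /forallP /(_ E) /implyP /(_ EM) /existsP[x /andP[xS /existsP[y /andP[yS /andP[_ /eqP defE]]]]] _.
by move: zE; rewrite defE !inE => /orP[]/eqP->.
Qed.

Lemma S_ism (T : finType) (e : rel T) (S : {set T}) M :
  is_matching e setT M -> mcover M \subset S -> is_matching e S M.
Proof.
move=> hM sub; apply/andP; split; last by case/andP: hM.
apply/forallP=> E; apply/implyP=> EM; have [x [y [exy defE]]] := ism_edge hM EM.
have /andP[hx hy] : (x \in mcover M) && (y \in mcover M) by apply: in_cover_edge; rewrite -defE.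
apply/existsP; exists x; rewrite (subsetP sub _ hx) /=; apply/existsP; exists y.
by rewrite (subsetP sub _ hy) exy defE eqxx.
Qed.

Lemma altX (T : finType) (e : rel T) (e_sym : symmetric e) (e_irr : irreflexive e) n :
  forall (M N : {set {set T}}) w, #|M| + #|N| < n -> is_matching e setT M -> is_matching e setT N ->
  w \in mcover M -> w \notin mcover N ->
  (exists N1, [/\ is_matching e setT N1, #|N1| = #|N|.+1 & mcover N1 \subset mcover M :|: mcover N]) \/
  (exists x M1, [/\ x \in mcover N, x != w, is_matching e setT M1, #|M1| = #|M| &
     mcover M1 = (mcover M :\ w) :|: [set x]]).
Proof.
elim: n => [|n IH] M N w; first by rewrite ltn0.
move=> hlt hM hN wM wN.
have [a [ewa waM]] := ism_at e_sym hM wM.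
have aw : a != w by apply/eqP=> eq; move: ewa; rewrite eq e_irr.
have /andP[_ aM] := in_cover_edge waM.
have cMD := cover_D1 hM waM.
set M0 := M :\ [set w; a].
have hM0 : is_matching e setT M0 := ism_sub hM (subsetDl _ _).
have hM0s : mcover M0 \subset mcover M by rewrite cMD subsetDl.
have cardM : #|M| = #|M0|.+1 by rewrite (cardsD1 [set w;a] M) waM.
have aM0 : a \notin mcover M0 by rewrite cMD !inE eqxx orbT.
have wM0 : w \notin mcover M0 by rewrite cMD !inE eqxx.
case: (boolP (a \in mcover N)) => aN; last first.
  left; exists ([set w; a] |: N); split.
  - exact: ism_add hN ewa wN aN.
  - by rewrite cardsU1 edge_notin.
  - rewrite cover_U1; apply/subsetP=> z; rewrite in_setU => /orP[|zN]; last by rewrite in_setU zN orbT.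
    by rewrite !inE => /orP[]/eqP->; rewrite ?wM ?aM.
have [b [eab abN]] := ism_at e_sym hN aN.
have /andP[_ bN] := in_cover_edge abN.
have bw : b != w by apply/eqP=> eq; rewrite -eq bN in wN.
have ba : b != a by apply/eqP=> eq; move: eab; rewrite eq e_irr.
have cND := cover_D1 hN abN.
set N0 := N :\ [set a; b].
have hN0 : is_matching e setT N0 := ism_sub hN (subsetDl _ _).
have hN0s : mcover N0 \subset mcover N by rewrite cND subsetDl.
have cardN : #|N| = #|N0|.+1 by rewrite (cardsD1 [set a;b] N) abN.
have aN0 : a \notin mcover N0 by rewrite cND !inE eqxx.
have bN0 : b \notin mcover N0 by rewrite cND !inE eqxx orbT.
have wN0 : w \notin mcover N0 by rewrite cND !inE (negbTE wN) andbF.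
case: (boolP (b \in mcover M)) => bM; last first.
  right; exists b, ([set a; b] |: M0); split=> //.
  - apply: ism_add hM0 eab aM0 _; by rewrite cMD !inE (negbTE bM) andbF.
  - by rewrite cardsU1 (edge_notin _ aM0) cardM.
  - rewrite cover_U1 cMD; apply/setP=> z; rewrite !inE.
    case: (eqVneq z a) => [->|za]; first by rewrite aw aM.
    case: (eqVneq z b) => [->|zb]; first by rewrite !orbT.
    by rewrite /= !orbF.
have bM0 : b \in mcover M0 by rewrite cMD !inE bM andbT negb_or bw ba.
have hlt0 : #|M0| + #|N0| < n by move: hlt; rewrite cardM cardN addSn addnS !ltnS => /ltnW.
case: (IH M0 N0 b hlt0 hM0 hN0 bM0 bN0) => [[N1 [hN1 cN1 sN1]]|[x [M1 [xN0 xb hM1 cM1 eM1]]]].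
- have wN1 : w \notin mcover N1.
    by apply/negP => /(subsetP sN1); rewrite in_setU (negbTE wM0) (negbTE wN0).
  have aN1 : a \notin mcover N1.
    by apply/negP => /(subsetP sN1); rewrite in_setU (negbTE aM0) (negbTE aN0).
  left; exists ([set w;a] |: N1); split.
  + exact: ism_add hN1 ewa wN1 aN1.
  + by rewrite cardsU1 (edge_notin _ wN1) cN1 cardN.
  + rewrite cover_U1; apply/subsetP=> z; rewrite in_setU => /orP[|/(subsetP sN1)].
      by rewrite !inE => /orP[]/eqP->; rewrite ?wM ?aM.
    by rewrite !in_setU => /orP[/(subsetP hM0s)|/(subsetP hN0s)] ->; rewrite ?orbT.
- have xN : x \in mcover N := subsetP hN0s _ xN0.
  have xa : x != a by apply/eqP=> eq; move: xN0; rewrite eq (negbTE aN0).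
  have xw : x != w by apply/eqP=> eq; move: xN; rewrite eq (negbTE wN).
  have aM1 : a \notin mcover M1 by rewrite eM1 !inE (negbTE aM0) andbF eq_sym (negbTE xa).
  have bM1 : b \notin mcover M1 by rewrite eM1 !inE eqxx eq_sym (negbTE xb).
  right; exists x, ([set a;b] |: M1); split=> //.
  + exact: ism_add hM1 eab aM1 bM1.
  + by rewrite cardsU1 (edge_notin _ aM1) cM1 cardM.
  + rewrite cover_U1 eM1 cMD; apply/setP=> z; rewrite !inE.
    case: (eqVneq z a) => [->|za]; first by rewrite aw aM.
    case: (eqVneq z b) => [->|zb]; first by rewrite bw bM.
    by rewrite /= orbF.
Qed.

Lemma sat_cover (T : finType) (M : {set {set T}}) v : saturates M v = (v \in mcover M).
Proof. by apply/idP/idP => [/existsP[E /andP[EM vE]]|/coverP[E EM vE]]; [apply/coverP; exists E|apply/existsP; exists E; apply/andP]. Qed.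

Lemma maxP (T : finType) (e : rel T) (S : {set T}) M : is_max_matching e S M ->
  is_matching e S M /\ forall M', is_matching e S M' -> #|M'| <= #|M|.
Proof. by case/andP=> h /forallP h2; split=> // M'; apply/implyP. Qed.

Lemma mk_max (T : finType) (e : rel T) (S : {set T}) M M' : is_max_matching e S M ->
  is_matching e S M' -> #|M| <= #|M'| -> is_max_matching e S M'.
Proof.
case/maxP=> _ h hM' le; apply/andP; split=> //; apply/forallP=> M''; apply/implyP=> h''.
exact: leq_trans (h _ h'') le.
Qed.

Lemma OP (T : finType) (e : rel T) (S : {set T}) v :
  reflect (v \in S /\ exists M, is_max_matching e S M /\ v \notin mcover M) (v \in GE_O e S).
Proof.
rewrite inE; apply: (iffP andP) => [[vS /existsP[M /andP[h1 h2]]]|[vS [M [h1 h2]]]].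
  by split=> //; exists M; rewrite -sat_cover.
by split=> //; apply/existsP; exists M; rewrite h1 sat_cover.
Qed.

Lemma max_restrict (T : finType) (e : rel T) (S : {set T}) M :
  is_max_matching e setT M -> mcover M \subset S -> is_max_matching e S M.
Proof.
case/maxP=> hM h sub; apply/andP; split; first exact: S_ism.
apply/forallP=> M'; apply/implyP=> /ism_S [h' _]; exact: h.
Qed.

Lemma max_extend (T : finType) (e : rel T) o M : o \in GE_O e setT ->
  is_max_matching e (setT :\ o) M -> is_max_matching e setT M.
Proof.
case/OP=> _ [M0 [hM0 oM0]] hM.
have hM0' : is_max_matching e (setT :\ o) M0.
  apply: max_restrict hM0 _; apply/subsetP=> z zM; rewrite !inE andbT.
  by apply/eqP=> eq; move: oM0; rewrite -eq zM.
case/maxP: hM => /ism_S[hMT _] h.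
apply: mk_max hM0 hMT _; case/maxP: hM0' => h0 _; exact: h _ h0.
Qed.

Lemma not_max_add (T : finType) (e : rel T) M x y : is_max_matching e setT M -> e x y ->
  x \notin mcover M -> y \notin mcover M -> False.
Proof.
case/maxP=> hM h exy hx hy.
have := h _ (ism_add hM exy hx hy); rewrite cardsU1 (edge_notin _ hx) add1n ltnn //.
Qed.

Lemma lemE (T : finType) (e : rel T) (e_sym : symmetric e) (e_irr : irreflexive e) o v :
  o \in GE_O e setT -> v \in GE_O e setT -> e o v ->
  exists y, [/\ y \in GE_O e setT, y != o & e v y].
Proof.
case/OP=> _ [M [hM oM]] vO eov.
have vM : v \in mcover M.
  by apply/negPn/negP=> vM; exact: not_max_add hM eov oM vM.
have [hMm hMle] := maxP hM.
have [w [evw vwM]] := ism_at e_sym hMm vM.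
have /andP[_ wM] := in_cover_edge vwM.
have wo : w != o by apply/eqP=> eq; move: oM; rewrite -eq wM.
have wv : w != v by apply/eqP=> eq; move: evw; rewrite eq e_irr.
have cD := cover_D1 hMm vwM.
have hM0 : is_matching e setT (M :\ [set v; w]) := ism_sub hMm (subsetDl _ _).
have oM0 : o \notin mcover (M :\ [set v; w]) by rewrite cD !inE (negbTE oM) andbF.
have vM0 : v \notin mcover (M :\ [set v; w]) by rewrite cD !inE eqxx.
exists w; split=> //; apply/OP; split; first by [].
exists ([set o; v] |: (M :\ [set v; w])); split.
  apply: mk_max hM (ism_add hM0 eov oM0 vM0) _.
  by rewrite cardsU1 (edge_notin _ oM0) (cardsD1 [set v; w] M) vwM.
by rewrite cover_U1 cD !inE (negbTE wo) (negbTE wv) eqxx.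
Qed.

Lemma claimB (T : finType) (e : rel T) o u : o \in GE_O e setT ->
  u \in GE_O e (setT :\ o) -> ~~ e o u.
Proof.
move=> oO /OP[uS [M [hM uM]]]; apply/negP=> eou.
have hMT := max_extend oO hM.
have [/ism_S [_ sub] _] := maxP hM.
have oM : o \notin mcover M by apply/negP=> /(subsetP sub); rewrite !inE eqxx.
exact: not_max_add hMT eou oM uM.
Qed.

Lemma lemL (T : finType) (e : rel T) (e_sym : symmetric e) (e_irr : irreflexive e) o u w :
  o \in GE_O e setT -> u \in GE_O e (setT :\ o) -> w \in GE_O e setT -> w != o -> e u w ->
  w \in GE_O e (setT :\ o).
Proof.
move=> oO uO' /OP[_ [N [hN wN]]] wo euw.
have := uO'; case/OP=> uS [M [hM uM]].
have hMT := max_extend oO hM.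
have [/ism_S [hMm sub] _] := maxP hM.
have [hNm hNle] := maxP hN.
have [_ hMle] := maxP hMT.
have wM : w \in mcover M by apply/negPn/negP=> wM; exact: not_max_add hMT euw uM wM.
have uw : u != w by apply/eqP=> eq; move: euw; rewrite eq e_irr.
have uo : u != o by move: uS; rewrite !inE andbT.
case: (altX e_sym e_irr (ltnSn _) hMm hNm wM wN) => [[N1 [h1 c1 _]]|[x [M1 [_ xw h1 c1 eM1]]]].
  by have := hNle _ h1; rewrite c1 ltnn.
have wM1 : w \notin mcover M1 by rewrite eM1 !inE eqxx /= eq_sym (negbTE xw).
case: (eqVneq x o) => [xo|xo].
  have uM1 : u \notin mcover M1 by rewrite eM1 !inE (negbTE uM) andbF xo (negbTE uo).
  have := hMle _ (ism_add h1 euw uM1 wM1).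
  by rewrite cardsU1 (edge_notin _ uM1) c1 ltnn.
apply/OP; split; first by rewrite !inE andbT.
exists M1; split=> //.
apply: mk_max hM _ _; last by rewrite c1.
apply: S_ism h1 _; apply/subsetP=> z; rewrite eM1 !inE => /orP[/andP[_ /(subsetP sub)]|/eqP->].
  by rewrite !inE.
by rewrite xo.
Qed.

Theorem lemma5 (T : finType) (e : rel T)
  (e_sym : symmetric e) (e_irr : irreflexive e)
  (hne : 0 < #|T|) (hsurp : surplus_ge e 2)
  (hIP : independent e (GE_I e [set: T] :|: GE_P e [set: T])) :
  (exists2 o, o \in GE_O e [set: T] &
     2 <= #|[set v in GE_O e [set: T] | e o v]|) /\
  (forall o v : T, o \in GE_O e [set: T] -> v \in GE_O e [set: T] -> e o v ->
     exists x y : T,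
       [/\ x \in GE_P e ([set: T] :\ o), y \in GE_P e ([set: T] :\ o) & e x y]).
Proof.
set O := GE_O e [set: T].
have IPind : forall x y, x \in GE_I e [set: T] :|: GE_P e [set: T] ->
    y \in GE_I e [set: T] :|: GE_P e [set: T] -> ~~ e x y.
  by move=> x y hx hy; move/forallP: hIP => /(_ x) /implyP /(_ hx) /forallP /(_ y) /implyP /(_ hy).
have notO : forall x, x \notin O -> x \in GE_I e [set: T] :|: GE_P e [set: T].
  by move=> x xO; rewrite /GE_P in_setU in_setD in_setU (negbTE xO) orbF in_setT andbT; case: (x \in GE_I _ _).
have surp : forall X : {set T}, independent e X -> X != set0 -> #|X| + 2 <= #|nbhd e setT X|.
  by move=> X h1 h2; move/forallP: hsurp => /(_ X) /implyP; apply; rewrite h1.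
split.
  have [t _] : exists t : T, true.
    by case/card_gt0P: hne => t _; exists t.
  have [o oO] : exists o, o \in O.
    case: (boolP (t \in O)) => tO; first by exists t.
    have ind1 : independent e [set t].
      by apply/forallP=> x; apply/implyP; rewrite inE => /eqP->; apply/forallP=> y;
         apply/implyP; rewrite inE => /eqP->; rewrite e_irr.
    have ne1 : [set t] != set0 by apply/set0Pn; exists t; rewrite inE.
    have := surp _ ind1 ne1; rewrite cards1 => h.
    have /set0Pn [y]: nbhd e setT [set t] != set0 by rewrite -card_gt0; apply: leq_trans h.
    rewrite !inE => /and3P[_ yt /existsP[x /andP[]]]; rewrite inE => /eqP-> ety.
    case: (boolP (y \in O)) => yO; first by exists y.
    by have := IPind _ _ (notO _ tO) (notO _ yO); rewrite ety.
  case: (boolP [exists x in O, exists y in O, e x y]).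
    case/existsP=> x /andP[xO /existsP[y /andP[yO exy]]].
    have [z [zO zx eyz]] := lemE e_sym e_irr xO yO exy.
    exists y => //.
    have le : #|[set x; z]| <= #|[set v0 in O | e y v0]|.
      apply: subset_leq_card; apply/subsetP=> a; rewrite in_set2 => /orP[]/eqP->; rewrite in_set.
        by rewrite xO e_sym exy.
      by rewrite zO eyz.
    by apply: leq_trans le; rewrite cards2 eq_sym zx.
  move=> hn; exfalso.
  have Oind : independent e O.
    apply/forallP=> x; apply/implyP=> xO; apply/forallP=> y; apply/implyP=> yO.
    by apply/negP=> exy; case/negP: hn; apply/existsP; exists x; rewrite xO; apply/existsP; exists y; rewrite yO.
  have ne0 : O != set0 by apply/set0Pn; exists o.
  have hO := surp _ Oind ne0.
  have [_ [M [hM _]]] := OP e _ o oO.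
  have [hMm _] := maxP hM.
  set I := GE_I e [set: T].
  have IM : #|I| <= #|M|.
    pose f i := odflt set0 [pick E in M | i \in E].
    have fP : forall i, i \in I -> (f i \in M) && (i \in f i).
      move=> i iI; have iM : i \in mcover M.
        apply/negPn/negP=> iM.
        have iO : i \in O by apply/OP; split=> //; exists M.
        by move: iI; rewrite /I /GE_I /nbhd in_set iO /= andbF.
      rewrite /f; case: pickP => [E //|none].
      by case/coverP: iM => E EM iE; have := none E; rewrite EM iE.
    have -> : #|I| = #|[set f i | i in I]|.
      rewrite card_in_imset // => i1 i2 h1 h2 eqf.
      apply/eqP; apply/negPn/negP=> ne.
      have /andP[EM i1E] := fP _ h1; have /andP[_ i2E] := fP _ h2.
      rewrite -eqf in i2E.
      have [x [y [exy defE]]] := ism_edge hMm EM.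
      have I1 : i1 \in GE_I e [set: T] :|: GE_P e [set: T] by rewrite inE h1.
      have I2 : i2 \in GE_I e [set: T] :|: GE_P e [set: T] by rewrite inE h2.
      move: i1E i2E; rewrite defE !inE => /orP[]/eqP e1 /orP[]/eqP e2; subst.
      + by rewrite eqxx in ne.
      + by have := IPind _ _ I1 I2; rewrite exy.
      + by have := IPind _ _ I2 I1; rewrite exy.
      + by rewrite eqxx in ne.
    apply: subset_leq_card; apply/subsetP=> E /imsetP [i iI ->].
    by case/andP: (fP _ iI).
  have MO : #|M| <= #|O|.
    pose g E := odflt o [pick z in E :&: O].
    have gP : forall E, E \in M -> (g E \in E) && (g E \in O).
      move=> E EM; rewrite /g; case: pickP => [z|none]; first by rewrite inE.
      have [x [y [exy defE]]] := ism_edge hMm EM.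
      have xE : x \in E by rewrite defE !inE eqxx.
      have yE : y \in E by rewrite defE !inE eqxx orbT.
      case: (boolP (x \in O)) => xO; first by have := none x; rewrite inE xE xO.
      case: (boolP (y \in O)) => yO; first by have := none y; rewrite inE yE yO.
      by have := IPind _ _ (notO _ xO) (notO _ yO); rewrite exy.
    have -> : #|M| = #|[set g E | E in M]|.
      rewrite card_in_imset // => E1 E2 h1 h2 eqg.
      apply/eqP; apply/negPn/negP=> ne.
      have := ism_disj hMm h1 h2 ne; rewrite disjoint_subset => /subsetP /(_ (g E1)).
      have /andP[g1 _] := gP _ h1; have /andP[g2 _] := gP _ h2.
      by rewrite inE g1 eqg g2 => /(_ isT).
    apply: subset_leq_card; apply/subsetP=> z /imsetP [E EM ->].
    by case/andP: (gP _ EM).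
  have := leq_trans hO (leq_trans IM MO).
  by rewrite addn2 ltnNge leqnSn.
move=> o v oO vO eov.
have [y [yO yo evy]] := lemE e_sym e_irr oO vO eov.
have vo : v != o by apply/eqP=> eq; move: eov; rewrite eq e_irr.
have vO' : v \notin GE_O e (setT :\ o).
  by apply/negP=> vO'; have := claimB oO vO'; rewrite eov.
have vnb : forall u, u \in GE_O e (setT :\ o) -> ~~ e u v.
  by move=> u uO'; apply/negP=> euv; have := lemL e_sym e_irr oO uO' vO vo euv; rewrite (negbTE vO').
have yO' : y \notin GE_O e (setT :\ o).
  apply/negP=> yO'; have := lemL e_sym e_irr oO yO' vO vo; rewrite e_sym evy (negbTE vO').
  by move=> /(_ isT).
have ynb : forall u, u \in GE_O e (setT :\ o) -> ~~ e u y.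
  by move=> u uO'; apply/negP=> euy; have := lemL e_sym e_irr oO uO' yO yo euy; rewrite (negbTE yO').
have inP : forall z, z != o -> z \notin GE_O e (setT :\ o) ->
    (forall u, u \in GE_O e (setT :\ o) -> ~~ e u z) -> z \in GE_P e (setT :\ o).
  move=> z zo zO' znb; rewrite /GE_P in_setD in_setU (negbTE zO') orbF in_setD1 zo in_setT andbT.
  rewrite /GE_I /nbhd in_set andbT; apply/negP=> /and3P[_ _ /existsP[u /andP[uO' euz]]].
  by have := znb u uO'; rewrite euz.
exists v, y; split=> //; exact: inP.
Qed.
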